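(* Let $n\geq 3$, let $\mathcal{F}$ be a maximal coclique of $\Gamma_{2n}$, and let $B$ be an $\mathcal{F}$-yellow $n$-space of $\mathrm{PG}(2n,q)$. Then the number of flags $(A',B')\in \mathcal{F}$ with pairwise distinct $n$-spaces $B'$ and with $A'\cap B=\emptyset$ (equivalently, the number of $n$-spaces $B'$ for which some $(A',B')\in\mathcal{F}$ has $A'\cap B=\emptyset$) is $\mathcal{O}(q^{n^2-1})$.
   Context: $\mathrm{PG}(2n,q)$ is the projective space of projective dimension $2n$ over the field of order $q$; an $i$-space is a subspace of projective dimension $i$. An $(n-1,n)$-flag is a pair $(A,B)$ with $A$ an $(n-1)$-space, $B$ an $n$-space and $A\subseteq B$. Two such flags $(A_1,B_1),(A_2,B_2)$ are opposite if $A_1\cap B_2=A_2\cap B_1=\emptyset$. $\Gamma_{2n}$ is the graph whose vertices are the $(n-1,n)$-flags, adjacent when opposite; a maximal coclique is an inclusion-maximal set of pairwise non-opposite flags. An $n$-space is $\mathcal{F}$-yellow if it occurs in at least $1$ and at most $\frac{q^{n}-1}{q-1}$ flags of $\mathcal{F}$. $\mathcal{O}(q^m)$ means bounded above by $Cq^m$ with $C$ depending only on $n$. *)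

(* Defs.v *)
From HB Require Import structures.
From mathcomp Require Import all_boot all_order all_algebra all_field.
Set Implicit Arguments. Unset Strict Implicit. Unset Printing Implicit Defensive.
Import GRing.Theory.
Local Open Scope ring_scope.

(* Subspaces of a finite-dimensional vector space over a finite field form a
   finite type (needed to count flags / subspaces). *)
Section FinVspace.
Import VectorInternalTheory.
Variables (K : finFieldType) (vT : vectType K).
HB.instance Definition _ := [Countable of {vspace vT} by <:].
HB.instance Definition _ := [Finite of {vspace vT} by <:].
End FinVspace.

Section Flags.
Variables (K : finFieldType) (n : nat).

(* The underlying vector space of PG(2n, q): row vectors of length 2n+1. *)
Definition V := 'rV[K]_(n.*2.+1).
Definition subsp := {vspace V}.

(* Projective i-space = vector subspace of dimension i+1.
   An (n-1,n)-flag (A,B): A an (n-1)-space, B an n-space, A <= B. *)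
Definition is_flag (f : subsp * subsp) : bool :=
  [&& \dim f.1 == n, \dim f.2 == n.+1 & (f.1 <= f.2)%VS].

(* Projective disjointness = trivial vector intersection. *)
Definition disjoint_sp (X Y : subsp) : bool := (X :&: Y)%VS == 0%VS.

Definition opposite (f g : subsp * subsp) : bool :=
  disjoint_sp f.1 g.2 && disjoint_sp g.1 f.2.

Definition coclique (F : {set subsp * subsp}) : bool :=
  [forall f in F, is_flag f] &&
  [forall f in F, forall g in F, ~~ opposite f g].

Definition max_coclique (F : {set subsp * subsp}) : bool :=
  coclique F &&
  [forall g, (is_flag g && [forall f in F, ~~ opposite f g]) ==> (g \in F)].

Definition nflags_on (F : {set subsp * subsp}) (B : subsp) : nat :=
  #|[set f in F | f.2 == B]|.

Definition yellow (F : {set subsp * subsp}) (B : subsp) : bool :=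
  [&& \dim B == n.+1, 0 < nflags_on F B &
      nflags_on F B <= (#|K| ^ n - 1) %/ (#|K| - 1)]%N.

Definition far_spaces (F : {set subsp * subsp}) (B : subsp) : {set subsp} :=
  [set B' : subsp | [exists A' : subsp, ((A', B') \in F) && disjoint_sp A' B]].

End Flags.

(* Main.v *)
Require Import Defs.
From HB Require Import structures.
From mathcomp Require Import all_boot all_order all_algebra all_field.
From mathcomp Require Import ring zify.
Set Implicit Arguments. Unset Strict Implicit. Unset Printing Implicit Defensive.
Import GRing.Theory.
Local Open Scope ring_scope.


Definition map_poly_extField (F : fieldType) (L : fieldExtType F) :=
  map_poly (in_alg L) : {poly F} -> {poly L}.
Local Notation "p ^%:A" := (map_poly_extField _ p)
  (format "p ^%:A") : ring_scope.

Lemma ext_of_dim (F : finFieldType) k : (0 < k)%N ->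
  {L : splittingFieldType F | \dim {:L} = k}.
Proof.
move=> k_gt0; set m := (#|F| ^ k)%N.
have F_gt1 : (1 < #|F|)%N by apply: finNzRing_gt1.
have m_gt1: (m > 1)%N by rewrite /m (ltn_exp2l 0).
have m_gt0 := ltnW m_gt1; have m1_gt0: (m.-1 > 0)%N by rewrite -ltnS prednK.
pose q := 'X^m - 'X; have Dq R: q R = ('X^(m.-1) - 1) * ('X - 0).
  by rewrite subr0 mulrBl mul1r -exprSr prednK.
have /FinSplittingFieldFor[/= L splitLq]: q F != 0.
  by rewrite Dq monic_neq0 ?rpredM ?monicXsubC ?monicXnsubC.
rewrite rmorphB rmorphXn /= map_polyX -/(q L) in splitLq.
exists L.
have [p _ pcharFp] := finPcharP F.
have pcharL: p \in [pchar L] by rewrite pchar_lalg.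
pose Fm := FinFieldExtType L.
have /finField_galois_generator[/= a _ Da]: (1 <= {:L})%VS by apply: sub1v.
pose Em := fixedSpace (a ^+ k)%g; rewrite dimv1 expn1 in Da.
have{splitLq} [zs DqL defL] := splitLq.
have mF0 : (m%:R : L) = 0.
  have pF : (p %| #|F|)%N.
    have := card_pprimeChar pcharFp; case: (logn _ _) => [|e] E.
      by move: F_gt1; rewrite E.
    by rewrite E dvdn_exp.
  apply/eqP; rewrite -(dvdn_pcharf pcharL) /m.
  by apply: dvdn_trans pF _; rewrite -{1}(expn1 #|F|) dvdn_exp2l.
have Uzs: uniq zs.
  rewrite -separable_prod_XsubC -(eqp_separable DqL) Dq separable_root andbC.
  rewrite /root !hornerE subr_eq0 eq_sym expr0n gtn_eqF ?oner_eq0 //=.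
  rewrite cyclotomic.separable_Xn_sub_1 // -subn1 natrB // subr_eq0.
  by rewrite mF0 eq_sym oner_eq0.
have cardL : #|Fm| = m.
  suffices /eq_card->: Fm =i zs.
    apply: succn_inj; rewrite (card_uniqP _) //= -(size_prod_XsubC _ id).
    by rewrite -(eqp_size DqL) size_polyDl size_polyXn // size_polyN size_polyX.
  have in_zs: zs =i Em.
    move=> z; rewrite -root_prod_XsubC -(eqp_root DqL) (sameP fixedSpaceP eqP).
    rewrite /root !hornerE subr_eq0 /= /m; congr (_ == z).
    elim: (k) => [|i IHi]; first by rewrite gal_id.
    by rewrite expgSr expnSr exprM IHi galM ?Da ?memvf.
  suffices defEm: Em = {:L}%VS by move=> z; rewrite in_zs defEm memvf.
  apply/eqP; rewrite eqEsubv subvf -defL -[Em]subfield_closed agenvS //.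
  by rewrite subv_add sub1v; apply/span_subvP=> z; rewrite in_zs.
have := cardL; rewrite -(card_vspacef (Vector.class (finvect_type L))) card_vspace /m.
by move/eqP; rewrite eqn_exp2l // => /eqP.
Qed.


Lemma iso_onto (K : fieldType) (aT rT : vectType K) (X : {vspace rT}) :
  \dim {:aT} = \dim X ->
  exists f : {linear aT -> rT},
    [/\ injective f, forall x, f x \in X & forall u, u \in X -> exists x, f x = u].
Proof.
move=> dE.
have [f Hf] := linear_of_free (vbasis {:aT}) (vbasis X).
have eqmap : map f (vbasis fullv) = vbasis X.
  by apply: Hf; [exact: basis_free (vbasisP _) | rewrite !size_tuple].
have limgE : limg (linfun f) = X.
  rewrite -{1}(span_basis (vbasisP fullv)) limg_span.
  rewrite (eq_map (lfunE f)) eqmap; exact: span_basis (vbasisP X).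
exists f; split.
- have inj : injective (linfun f); last first.
    by move=> x y; rewrite -!(lfunE f); apply: inj.
  apply/lker0P.
  have := limg_ker_dim (linfun f) fullv; rewrite limgE capfv -dE.
  move=> /eqP; rewrite -{2}[\dim fullv]add0n eqn_add2r dimv_eq0 => /eqP ->.
  by rewrite eqxx.
- by move=> x; rewrite -limgE -(lfunE f) memv_img ?memvf.
- move=> u; rewrite -limgE => /memv_imgP [x _ ->]; exists x.
  by rewrite lfunE.
Qed.


Lemma spread (K : finFieldType) (vT : vectType K) (U W0 : {vspace vT}) (k : nat)
  (Phi : {set {vspace vT}}) :
  \dim U = k.+1 -> \dim W0 = k.+1 -> (U :&: W0 = 0)%VS ->
  (forall X, X \in Phi -> [/\ (X <= U + W0)%VS, (X :&: W0 = 0)%VS & \dim X = k.+1]) ->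
  (forall X Y, X \in Phi -> Y \in Phi -> (X :&: Y != 0)%VS) ->
  (#|Phi| <= #|K| ^ (k.+1 * k))%N.
Proof.
move=> dU dW0 UW0 HPhi Hint.
have [L dL] := ext_of_dim K (ltn0Sn k).
have := @iso_onto K L vT U; rewrite dL dU => /(_ erefl) [al [al_inj al_in al_onto]].
have := @iso_onto K L vT W0; rewrite dL dW0 => /(_ erefl) [be [be_inj be_in be_onto]].
pose FL := finvect_type L.
have sumE X : X \in Phi -> (X + W0 = U + W0)%VS.
  move=> /HPhi [sX XW dXW]; apply/eqP; rewrite eqEdim subv_add sX addvSr /=.
  by rewrite !dimv_disjoint_sum // dXW dU dW0.
have G_ex X x : X \in Phi -> exists y : FL, al x + be y \in X.
  move=> XP; have : al x \in (X + W0)%VS by rewrite sumE // (subvP (addvSl U W0)).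
  case/memv_addP => x' x'X [w0 w0W Ex]; have [y0 Ey0] := be_onto _ w0W.
  by exists (- y0); rewrite linearN /= Ey0 Ex addrK.
pose G (X : {vspace vT}) (x : L) : L := odflt 0 [pick y : FL | al x + be y \in X].
have G_spec X x : X \in Phi -> al x + be (G X x) \in X.
  move=> XP; rewrite /G; case: pickP => [y //|none].
  by have [y] := G_ex X x XP; rewrite none.
have G_uniq X x y : X \in Phi -> al x + be y \in X -> y = G X x.
  move=> XP Hy; have := G_spec X x XP => HG.
  have : be (y - G X x) \in (X :&: W0)%VS.
    rewrite memv_cap be_in andbT linearB /=.
    have -> : be y - be (G X x) = (al x + be y) - (al x + be (G X x)).
      by rewrite opprD addrACA subrr add0r.
    by rewrite memvB.
  have [_ XW _] := HPhi X XP; rewrite XW memv0 => /eqP.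
  by rewrite -(linear0 be) => /be_inj /eqP; rewrite subr_eq0 => /eqP.
have G_lin X : X \in Phi -> forall a x z, G X (a *: x + z) = a *: G X x + G X z.
  move=> XP a x z; symmetry; apply: G_uniq => //.
  rewrite !linearP /=.
  have -> : a *: al x + al z + (a *: be (G X x) + be (G X z)) =
     a *: (al x + be (G X x)) + (al z + be (G X z)) by rewrite scalerDr addrACA.
  by rewrite memvD ?memvZ ?G_spec.
have dec w : w \in (U + W0)%VS -> exists x y, w = al x + be y.
  case/memv_addP => u uU [w0 w0W ->].
  have [x <-] := al_onto _ uU; have [y <-] := be_onto _ w0W.
  by exists x, y.
pose e := vbasis (fullv : {vspace L}).
have e_ne0 i : (i < k.+1)%N -> e`_i != 0.
  move=> lt; apply: (free_not0 (basis_free (vbasisP _))).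
  by apply: mem_nth; rewrite size_tuple dL.
pose enc (X : {vspace vT}) : {ffun 'I_k -> FL} :=
  [ffun j : 'I_k => (G X e`_j.+1 - G X e`_0 / e`_0 * e`_j.+1 : FL)].
have enc_inj : {in Phi &, injective enc}.
  move=> X Y XP YP Eenc.
  set c := (G X e`_0 - G Y e`_0) / e`_0.
  have Hb i : (i < k.+1)%N -> G X e`_i - G Y e`_i = c * e`_i.
    case: i => [_|j lt].
      by rewrite /c -mulrA mulVf ?e_ne0 // mulr1.
    have lt' : (j < k)%N by rewrite -ltnS.
    have := congr1 (fun f : {ffun 'I_k -> FL} => f (Ordinal lt')) Eenc; rewrite !ffunE => H.
    have H' : G X e`_j.+1 - G X e`_0 / e`_0 * e`_j.+1 =
              G Y e`_j.+1 - G Y e`_0 / e`_0 * e`_j.+1 := H.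
    move/eqP: H'; rewrite subr_eq => /eqP ->.
    rewrite /c !mulrBl.
    move: (G Y e`_j.+1) (G X e`_0 / e`_0 * e`_j.+1) (G Y e`_0 / e`_0 * e`_j.+1) => A B C.
    ring.
  have Hall x : G X x - G Y x = c * x.
    pose h z := G X z - G Y z - c * z.
    have hlin : linear h.
      move=> a z w; rewrite /h !G_lin //.
      rewrite scalerBr scalerBr mulrDr -scalerAr.
      move: (a *: G X z) (G X w) (a *: G Y z) (G Y w) (a *: (c * z)) (c * w) => A B C D E F.
      ring.
    pose hL : {linear L -> L} := HB.pack h (GRing.isLinear.Build _ _ _ _ h hlin).
    have : hL x = 0.
      rewrite (coord_vbasis (memvf x)) linear_sum big1 // => i _.
      rewrite linearZ /= /h Hb ?subrr ?scaler0 //.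
      by rewrite -dL ltn_ord.
    by rewrite /= /h => /eqP; rewrite subr_eq0 => /eqP.
  have Gsplit Z x y : Z \in Phi -> al x + be y \in Z -> y = G Z x.
    by move=> ZP; apply: G_uniq.
  have [sX XW _] := HPhi X XP.
  have c0 : c = 0.
    have nz := Hint X Y XP YP.
    set w := vpick (X :&: Y)%VS.
    have wXY : w \in (X :&: Y)%VS by apply: memv_pick.
    have wn0 : w != 0 by rewrite vpick0.
    move: (wXY); rewrite memv_cap => /andP [wX wY].
    have [x [y Ew]] := dec w (subvP sX _ wX).
    have hx := Gsplit X x y XP; have hy := Gsplit Y x y YP.
    rewrite -Ew in hx hy; have := Hall x; rewrite -(hx wX) -(hy wY) subrr.
    move/esym/eqP; rewrite mulf_eq0 => /orP [/eqP //|/eqP x0].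
    have : w \in (X :&: W0)%VS by rewrite memv_cap wX Ew x0 linear0 add0r be_in.
    by rewrite XW memv0 (negPf wn0).
  have sXY : (X <= Y)%VS.
    apply/subvP => w wX; have [x [y Ew]] := dec w (subvP sX _ wX).
    have hx := Gsplit X x y XP (etrans (congr1 (fun t => t \in X) (esym Ew)) wX).
    have := Hall x; rewrite c0 mul0r => /eqP; rewrite subr_eq0 => /eqP EG.
    by rewrite Ew hx EG G_spec.
  have [_ _ dY] := HPhi Y YP; have [_ _ dX] := HPhi X XP.
  have : (X == Y) by rewrite eqEdim sXY dX dY leqnn.
  by move/eqP.
have cardFL : #|FL| = (#|K| ^ k.+1)%N.
  by rewrite -(card_vspacef (Vector.class FL)) card_vspace dL.
rewrite -(card_in_imset enc_inj); apply: leq_trans (max_card _) _.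
by rewrite card_ffun card_ord cardFL -expnM.
Qed.


Lemma dimV (K : finFieldType) n : \dim (fullv : subsp K n) = n.*2.+1.
Proof. by rewrite dimvf /dim /= mul1n. Qed.

Lemma dim_cap_ge (K : fieldType) (vT : vectType K) (X Y : {vspace vT}) :
  (\dim X + \dim Y <= \dim (X :&: Y) + \dim (fullv : {vspace vT}))%N.
Proof. by rewrite -dimv_sum_cap addnC leq_add2l dimvS // subvf. Qed.

Lemma dim1_eq (K : fieldType) (vT : vectType K) (P : {vspace vT}) x :
  \dim P = 1%N -> x \in P -> x != 0 -> P = <[x]>%VS.
Proof.
move=> dP xP xn0; apply/eqP; rewrite eq_sym eqEdim -memvE xP dP dim_vline xn0.
by [].
Qed.

Lemma far_witness (K : finFieldType) n (F : {set subsp K n * subsp K n}) B B' :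
  B' \in far_spaces F B -> exists A', ((A', B') \in F) /\ disjoint_sp A' B.
Proof. by rewrite inE => /existsP [A' /andP [AF dis]]; exists A'. Qed.

Lemma cocliqueP (K : finFieldType) n (F : {set subsp K n * subsp K n}) :
  coclique F ->
  (forall f, f \in F -> [/\ \dim f.1 = n, \dim f.2 = n.+1 & (f.1 <= f.2)%VS]) /\
  (forall f g, f \in F -> g \in F -> ~~ opposite f g).
Proof.
case/andP => /forall_inP fl /forall_inP op; split.
  by move=> f /fl /and3P [/eqP -> /eqP -> ->].
by move=> f g /op /forall_inP H /H.
Qed.

Lemma disjE (K : finFieldType) n (X Y : subsp K n) :
  disjoint_sp X Y = ((X :&: Y)%VS == 0%VS).
Proof. by []. Qed.

Lemma fam_meet (K : finFieldType) n (F : {set subsp K n * subsp K n}) (B P B1 B2 : subsp K n) :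
  coclique F -> \dim P = 1%N ->
  B1 \in far_spaces F B -> B2 \in far_spaces F B ->
  (B1 :&: B)%VS = P -> (B2 :&: B)%VS = P ->
  (2 <= \dim (B1 :&: B2))%N.
Proof.
move=> coF dP /far_witness [A1 [A1F d1]] /far_witness [A2 [A2F d2]] E1 E2.
have [fl op] := cocliqueP coF.
have [_ _ A1B1] := fl _ A1F; have [_ _ A2B2] := fl _ A2F.
rewrite leqNgt ltnS; apply/negP => small.
have PB12 : (P <= B1 :&: B2)%VS.
  by rewrite subv_cap; apply/andP; split; [rewrite -E1 | rewrite -E2]; exact: capvSl.
have EP : (B1 :&: B2)%VS = P.
  by apply/eqP; rewrite eq_sym eqEdim PB12 dP.
have := op _ _ A1F A2F; rewrite /opposite /= !disjE.
have z1 : (A1 :&: B2 = 0)%VS.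
  apply/eqP; rewrite -subv0 -(eqP d1) subv_cap capvSl /=.
  have : (A1 :&: B2 <= B1 :&: B2)%VS by rewrite subv_cap capvSr andbT
     (subv_trans (capvSl _ _) A1B1).
  by rewrite EP -E1 => /subv_trans; apply; apply: capvSr.
have z2 : (A2 :&: B1 = 0)%VS.
  apply/eqP; rewrite -subv0 -(eqP d2) subv_cap capvSl /=.
  have : (A2 :&: B1 <= B1 :&: B2)%VS by rewrite subv_cap capvSr /=
     (subv_trans (capvSl _ _) A2B2).
  by rewrite EP -E2 => /subv_trans; apply; apply: capvSr.
by rewrite z1 z2 eqxx.
Qed.

Lemma fam_bound (K : finFieldType) (k : nat) (F : {set subsp K k.+1 * subsp K k.+1})
  (B P : subsp K k.+1) :
  coclique F -> \dim B = k.+2 -> \dim P = 1%N -> (P <= B)%VS ->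
  (#|[set B' in far_spaces F B | (B' :&: B)%VS == P]| <= #|K| ^ (k.+1 * k))%N.
Proof.
move=> coF dB dP PB.
set n := k.+1.
set Fam := [set B' in far_spaces F B | (B' :&: B)%VS == P].
have [fl op] := cocliqueP coF.
set Wc := (P^C)%VS.
have dWc : \dim Wc = n.*2 by rewrite dimv_compl dimV dP subn1.
have fullE Y : (P <= Y)%VS -> (Y + Wc)%VS = fullv.
  move=> PY; apply/eqP; rewrite eqEsubv subvf /= -(addv_complf P).
  by rewrite subv_add (subv_trans PY (addvSl _ _)) addvSr.
have dcap Y : (P <= Y)%VS -> (\dim (Y :&: Wc) + n.*2.+1 = \dim Y + n.*2)%N.
  move=> PY; have := dimv_sum_cap Y Wc; rewrite fullE // dimV dWc => <-.
  by rewrite addnC.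
have FamP B' : B' \in Fam -> [/\ \dim B' = n.+1, (P <= B')%VS & (B' :&: B)%VS = P].
  rewrite inE => /andP [/far_witness [A' [AF _]] /eqP E].
  have [_ dB' _] := fl _ AF; split => //.
  by rewrite -E capvSl.
have dX B' : B' \in Fam -> \dim (B' :&: Wc) = n.
  case/FamP => dB' PB' _; have := dcap _ PB'; rewrite dB'.
  move: (\dim (B' :&: Wc)) => d; rewrite /n; lia.
have dW0 : \dim (B :&: Wc) = n.
  have := dcap _ PB; rewrite dB.
  move: (\dim (B :&: Wc)) => d; rewrite /n; lia.
set W0 := (B :&: Wc)%VS; set U := (Wc :\: B)%VS.
have dU : \dim U = n.
  have := dimv_cap_compl Wc B; rewrite capvC -/W0 dW0 dWc.
  move: (\dim U) => d; rewrite /n; lia.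
have UW0 : (U :&: W0 = 0)%VS.
  apply/eqP; rewrite -subv0 -(capv_diff Wc B).
  by rewrite subv_cap capvSl /= (subv_trans (capvSr _ _)) // capvSl.
have UW0E : (U + W0)%VS = Wc by rewrite /W0 capvC addv_diff_cap.
have recon B' : B' \in Fam -> (P + (B' :&: Wc))%VS = B'.
  move=> BF; have [dB' PB' _] := FamP _ BF.
  apply/eqP; rewrite eqEdim subv_add PB' capvSl /= dB'.
  rewrite dimv_disjoint_sum ?dP ?dX //.
  apply/eqP; rewrite -subv0 -(capv_compl P) subv_cap capvSl /=.
  by rewrite (subv_trans (capvSr _ _)) // capvSr.
have inj : {in Fam &, injective (fun B' => (B' :&: Wc)%VS)}.
  by move=> B1 B2 F1 F2 /= E; rewrite -(recon _ F1) -(recon _ F2) E.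
rewrite -(card_in_imset inj).
apply: spread dU dW0 UW0 _ _.
- move=> X /imsetP [B' BF ->]; split.
  + by rewrite UW0E capvSr.
  + have [_ _ E] := FamP _ BF.
    apply/eqP; rewrite -subv0; apply/subvP => v.
    rewrite !memv_cap => /andP [/andP [vB' vW] /andP [vB _]].
    have : v \in (P :&: Wc)%VS by rewrite memv_cap -E memv_cap vB' vB vW.
    by rewrite capv_compl.
  + exact: dX.
- move=> X Y /imsetP [B1 F1 ->] /imsetP [B2 F2 ->].
  have [_ PB1 E1] := FamP _ F1; have [_ PB2 E2] := FamP _ F2.
  have m2 : (2 <= \dim (B1 :&: B2))%N.
    move/setIdP: F1 => [far1 _]; move/setIdP: F2 => [far2 _].
    exact: fam_meet coF dP far1 far2 E1 E2.
  have sub : ((B1 :&: B2) :&: Wc <= (B1 :&: Wc) :&: (B2 :&: Wc))%VS.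
    apply/subvP => v; rewrite !memv_cap => /andP [/andP [-> ->] ->] //.
  have := dim_cap_ge (B1 :&: B2) Wc; rewrite dWc dimV => ge.
  rewrite -dimv_eq0 -lt0n; apply: leq_trans (dimvS sub).
  rewrite -(leq_add2r n.*2.+1); apply: leq_trans ge.
  move: m2; move: (\dim (B1 :&: B2)) => d; rewrite /n; lia.
Qed.

Lemma card_points (K : finFieldType) n (A : subsp K n) :
  (#|[set P : subsp K n | (\dim P == 1%N) && (P <= A)%VS]| * (#|K| - 1)
     <= #|K| ^ \dim A)%N.
Proof.
set pts := [set P : subsp K n | _].
set nz := [set a : K | a != 0].
have cnz : #|nz| = (#|K| - 1)%N.
  by rewrite subn1 -(cardsC1 (0 : K)); apply: eq_card => a; rewrite !inE.
pose f (p : subsp K n * K) : V K n := p.2 *: vpick p.1.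
have ptsP P : P \in pts -> [/\ \dim P = 1%N, (P <= A)%VS & vpick P != 0].
  rewrite inE => /andP [/eqP dP PA]; split => //.
  by rewrite vpick0 -dimv_eq0 dP.
have fline p : p \in setX pts nz -> p.1 = <[f p]>%VS.
  case: p => P a /setXP [/ptsP [dP _ vn0]]; rewrite inE => an0 /=.
  apply: dim1_eq => //; first by rewrite /f memvZ ?memv_pick.
  by rewrite /f scaler_eq0 negb_or an0 vn0.
have finj : {in setX pts nz &, injective f}.
  move=> [P a] [Q b] Pa Qb E.
  have EPQ : P = Q by have := fline _ Pa; have := fline _ Qb; rewrite /= E => <- <-.
  move: E; rewrite /f /= -EPQ => /eqP; rewrite -subr_eq0 -scalerBl scaler_eq0.
  case/setXP: Pa => /ptsP [_ _ vn0] _.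
  by rewrite (negPf vn0) orbF subr_eq0 => /eqP ->.
rewrite -cnz -cardsX -(card_in_imset finj).
have sub : f @: setX pts nz \subset [set v : V K n | v \in A].
  apply/subsetP => v /imsetP [[P a] /setXP [/ptsP [_ PA _] _] ->].
  by rewrite inE /f memvZ // (subvP PA) ?memv_pick.
apply: leq_trans (subset_leq_card sub) _.
by rewrite -card_vspace; apply: eq_leq; apply: eq_card => v; rewrite inE.
Qed.

Theorem mainTheorem10 :
  forall n : nat, (3 <= n)%N ->
  exists C : nat,
  forall (K : finFieldType) (F : {set subsp K n * subsp K n}) (B : subsp K n),
    max_coclique F -> yellow F B ->
    (#|far_spaces F B| <= C * #|K| ^ (n ^ 2 - 1))%N.
Proof.
case=> [//|k] _; exists 2%N => K F B /andP [coF _] /and3P [/eqP dB npos _].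
have [fl op] := cocliqueP coF.
move: npos; rewrite /nflags_on card_gt0 => /set0Pn [[A0 B0]].
rewrite inE => /andP [fF /eqP /= eB]; subst B0.
have [dA0 _ A0B] := fl _ fF.
set pts := [set P : subsp K k.+1 | (\dim P == 1%N) && (P <= A0)%VS].
have far_pts B' : B' \in far_spaces F B -> (B' :&: B)%VS \in pts.
  move=> farB; have [A' [AF dis]] := far_witness farB.
  have [dA' dB' AB'] := fl _ AF.
  have nop := op _ _ fF AF; rewrite /opposite /= dis andbT in nop.
  have le1 : (\dim (B' :&: B) <= 1)%N.
    have s : (A' + (B' :&: B) <= B')%VS by rewrite subv_add AB' capvSl.
    have := dimvS s; rewrite dimv_disjoint_sum ?dA' ?dB'.
      by move: (\dim (B' :&: B)) => d; lia.
    apply/eqP; rewrite -subv0 -(eqP dis) subv_cap capvSl /=.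
    by rewrite (subv_trans (capvSr _ _)) // capvSr.
  have sAB : (A0 :&: B' <= B' :&: B)%VS.
    by rewrite subv_cap capvSr (subv_trans (capvSl _ _)).
  have pos : (0 < \dim (A0 :&: B'))%N by rewrite lt0n dimv_eq0.
  have E : (A0 :&: B')%VS = (B' :&: B)%VS.
    apply/eqP; rewrite eqEdim sAB /=; apply: leq_trans le1 pos.
  rewrite inE -E capvSl andbT eqn_leq pos E le1.
  by [].
have step1 : (#|far_spaces F B| <=
    \sum_(P in pts) #|[set B' in far_spaces F B | (B' :&: B)%VS == P]|)%N.
  rewrite -sum1_card (partition_big (fun B' => (B' :&: B)%VS) (mem pts)) //=.
  apply: leq_sum => P _; rewrite sum1dep_card; apply: eq_leq.
  by apply: eq_card => B'; rewrite !inE.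
have step2 : (\sum_(P in pts) #|[set B' in far_spaces F B | (B' :&: B)%VS == P]|
    <= #|pts| * #|K| ^ (k.+1 * k))%N.
  rewrite -sum_nat_const; apply: leq_sum => P; rewrite inE => /andP [/eqP dP PA].
  exact: fam_bound coF dB dP (subv_trans PA A0B).
have step3 := card_points A0; rewrite dA0 -/pts in step3.
apply: leq_trans (leq_trans step1 step2) _.
have q2 : (1 < #|K|)%N by apply: finNzRing_gt1.
have tb : (#|pts| <= 2 * #|K| ^ k)%N.
  rewrite -(leq_pmul2r (ltnW q2)) -mulnA -expnSr.
  apply: leq_trans (_ : 2 * (#|pts| * (#|K| - 1)) <= _)%N; last by rewrite leq_mul2l step3 orbT.
  move: q2; move: (#|K|) (#|pts|) => q t q2; nia.
have -> : (k.+1 ^ 2 - 1 = k + k.+1 * k)%N by rewrite expnS expn1; lia.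
rewrite expnD mulnA leq_mul2r tb orbT //.
Qed.
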